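(* The second-order ordinary differential equation $$(\chi+\psi)^{2}\frac{d^{2}\psi}{d\chi^{2}}+(\chi+\psi)\left(\frac{d\psi}{d\chi}-2(2+\chi)\right)\frac{d\psi}{d\chi}+(6+4\chi+3\psi)\psi=0$$ for $\psi=\psi(\chi)$ admits no (nontrivial) Lie point symmetries.
   Context: This equation is the reduction of the Chazy equation $y'''-2yy''+3(y')^2=0$ by the invariants $\chi=xy$, $\psi=x^2y'$ of the scaling symmetry $x\partial_x-y\partial_y$. *)

(* Defs.v *)
From Stdlib Require Import Reals.
Open Scope R_scope.

Definition open2 (U : R -> R -> Prop) : Prop :=
  forall x y, U x y -> exists r, 0 < r /\
    forall x' y', Rabs (x' - x) < r -> Rabs (y' - y) < r -> U x' y'.

Definition cont2_on (U : R -> R -> Prop) (f : R -> R -> R) : Prop :=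
  forall x y, U x y -> forall eps, 0 < eps -> exists delta, 0 < delta /\
    forall x' y', Rabs (x' - x) < delta -> Rabs (y' - y) < delta ->
      Rabs (f x' y' - f x y) < eps.

Definition partial_x_on (U : R -> R -> Prop) (f g : R -> R -> R) : Prop :=
  forall x y, U x y -> derivable_pt_lim (fun t => f t y) x (g x y).
Definition partial_y_on (U : R -> R -> Prop) (f g : R -> R -> R) : Prop :=
  forall x y, U x y -> derivable_pt_lim (fun t => f x t) y (g x y).

(** D is the family of all partial derivatives of f on U:
    D i j = d^i/dx^i d^j/dy^j f, all existing and continuous on U.
    Hence f is C^infinity (smooth) on U. *)
Definition smooth_family (U : R -> R -> Prop) (f : R -> R -> R)
    (D : nat -> nat -> R -> R -> R) : Prop :=
  (forall x y, U x y -> D O O x y = f x y) /\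
  (forall i j, partial_x_on U (D i j) (D (S i) j) /\
               partial_y_on U (D i j) (D i (S j)) /\
               cont2_on U (D i j)).

(** The ODE  F(chi, psi, psi', psi'') = 0  with x = chi, y = psi, p = psi', q = psi'':
    (x+y)^2 q + (x+y)(p - 2(2+x)) p + (6+4x+3y) y = 0. *)
Definition F (x y p q : R) : R :=
  (x + y) ^ 2 * q + (x + y) * (p - 2 * (2 + x)) * p + (6 + 4 * x + 3 * y) * y.

Definition F_x (x y p q : R) : R :=
  2 * (x + y) * q + (p - 2 * (2 + x)) * p - 2 * (x + y) * p + 4 * y.
Definition F_y (x y p q : R) : R :=
  2 * (x + y) * q + (p - 2 * (2 + x)) * p + (6 + 4 * x + 6 * y).
Definition F_p (x y p q : R) : R :=
  (x + y) * (2 * p - 2 * (2 + x)).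
Definition F_q (x y p q : R) : R :=
  (x + y) ^ 2.

(** Second prolongation of X = xi d/dx + eta d/dy applied to F, with the
    partial derivatives of xi, eta given by the families Dxi, Deta. *)
Definition eta1 (Dxi Deta : nat -> nat -> R -> R -> R) (x y p : R) : R :=
  Deta 1%nat 0%nat x y + (Deta 0%nat 1%nat x y - Dxi 1%nat 0%nat x y) * p
  - Dxi 0%nat 1%nat x y * p ^ 2.

Definition eta2 (Dxi Deta : nat -> nat -> R -> R -> R) (x y p q : R) : R :=
  Deta 2%nat 0%nat x y
  + (2 * Deta 1%nat 1%nat x y - Dxi 2%nat 0%nat x y) * p
  + (Deta 0%nat 2%nat x y - 2 * Dxi 1%nat 1%nat x y) * p ^ 2
  - Dxi 0%nat 2%nat x y * p ^ 3
  + (Deta 0%nat 1%nat x y - 2 * Dxi 1%nat 0%nat x y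
     - 3 * Dxi 0%nat 1%nat x y * p) * q.

Definition pr2X_F (Dxi Deta : nat -> nat -> R -> R -> R) (x y p q : R) : R :=
  Dxi 0%nat 0%nat x y * F_x x y p q + Deta 0%nat 0%nat x y * F_y x y p q
  + eta1 Dxi Deta x y p * F_p x y p q + eta2 Dxi Deta x y p q * F_q x y p q.

(** X = xi d/dx + eta d/dy (xi, eta smooth on the open set U) is a Lie point
    symmetry of the ODE on U: infinitesimal invariance criterion
    pr^(2) X F = 0 whenever F = 0. *)
Definition lie_point_symmetry (U : R -> R -> Prop) (xi eta : R -> R -> R) : Prop :=
  exists Dxi Deta,
    smooth_family U xi Dxi /\ smooth_family U eta Deta /\
    forall x y p q, U x y -> F x y p q = 0 -> pr2X_F Dxi Deta x y p q = 0.

(* Main.v *)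
Require Import Defs.
From Stdlib Require Import Reals Lra Lia List.
From Coquelicot Require Import Coquelicot.
Import ListNotations.
Open Scope R_scope.

Definition mono := (R * nat * nat * nat)%type.
Definition mval (m:mono) (x y : R) : R :=
  let '(c,a,b,d) := m in c * x^a * y^b / (x+y)^d.
Definition dxm (m:mono) : list mono :=
  let '(c,a,b,d) := m in
  (match a with O => [] | S _ => [(c * INR a, pred a, b, d)] end) ++
  (match d with O => [] | S _ => [(- (c * INR d), a, b, S d)] end).
Definition dym (m:mono) : list mono :=
  let '(c,a,b,d) := m in
  (match b with O => [] | S _ => [(c * INR b, a, pred b, d)] end) ++
  (match d with O => [] | S _ => [(- (c * INR d), a, b, S d)] end).
Definition msum (l : list mono) x y := fold_right Rplus 0 (map (fun m' => mval m' x y) l).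

Lemma is_derive_eq (f : R -> R) x l l' : is_derive f x l -> l = l' -> is_derive f x l'.
Proof. intros H E; subst; exact H. Qed.

Lemma mono_der0 c a b d x y : x + y <> 0 -> is_derive (fun t => c * t^a * y^b / (t+y)^d) x
  (c * INR a * x^(pred a) * y^b / (x+y)^d + (- (c * INR d)) * x^a * y^b / (x+y)^(S d)).
Proof.
  intros H. auto_derive.
  - apply pow_nonzero; auto.
  - destruct d as [|d]; simpl; field; repeat split; auto; try apply pow_nonzero; auto.
Qed.
Lemma mono_der m x y : x + y <> 0 -> is_derive (fun t => mval m t y) x (msum (dxm m) x y).
Proof.
  intros H. destruct m as [[[c a] b] d]. eapply is_derive_ext. intro t. reflexivity.
  eapply is_derive_eq. apply mono_der0; auto.
  destruct a, d; unfold msum; simpl; try field; repeat split; auto; try apply pow_nonzero; auto.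
Qed.
Lemma mono_dery0 c a b d x y : x + y <> 0 -> is_derive (fun t => c * x^a * t^b / (x+t)^d) y
  (c * INR b * x^a * y^(pred b) / (x+y)^d + (- (c * INR d)) * x^a * y^b / (x+y)^(S d)).
Proof.
  intros H. auto_derive.
  - apply pow_nonzero; auto.
  - destruct d as [|d]; simpl; field; repeat split; auto; try apply pow_nonzero; auto.
Qed.
Lemma mono_dery m x y : x + y <> 0 -> is_derive (fun t => mval m x t) y (msum (dym m) x y).
Proof.
  intros H. destruct m as [[[c a] b] d]. eapply is_derive_ext. intro t. reflexivity.
  eapply is_derive_eq. apply mono_dery0; auto.
  destruct b, d; unfold msum; simpl; try field; repeat split; auto; try apply pow_nonzero; auto.
Qed.

Lemma der_zero_loc (f : R -> R) x l r : 0 < r -> (forall t, Rabs (t - x) < r -> f t = 0) ->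
  is_derive f x l -> l = 0.
Proof.
  intros Hr Hz Hd.
  assert (Hd' : is_derive (fun _ => 0) x l).
  { apply (is_derive_ext_loc f). exists (mkposreal r Hr). intros t Ht. apply Hz. exact Ht. exact Hd. }
  assert (H0 : is_derive (fun _ : R => 0) x 0) by (auto_derive; auto).
  pose proof (is_derive_unique _ _ _ Hd') as E1. pose proof (is_derive_unique _ _ _ H0) as E2.
  rewrite <- E1. exact E2.
Qed.

Section Gen.
Variable T : Type.
Variable val : T -> R -> R -> R.
Variables sx sy : T -> T.

Fixpoint ev (e : list (mono * T)) (x y : R) : R :=
  match e with [] => 0 | (m,a) :: e' => mval m x y * val a x y + ev e' x y end.

Definition dX (e : list (mono*T)) : list (mono*T) :=
  flat_map (fun p => let '(m,a) := p in (m, sx a) :: map (fun m' => (m', a)) (dxm m)) e.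
Definition dY (e : list (mono*T)) : list (mono*T) :=
  flat_map (fun p => let '(m,a) := p in (m, sy a) :: map (fun m' => (m', a)) (dym m)) e.

Lemma ev_app e1 e2 x y : ev (e1 ++ e2) x y = ev e1 x y + ev e2 x y.
Proof. induction e1 as [|[m a] e1 IH]; simpl; [ring| rewrite IH; ring]. Qed.


Lemma ev_map l a x y : ev (map (fun m' => (m', a)) l) x y = msum l x y * val a x y.
Proof. induction l as [|m l IH]; unfold msum in *; simpl; [ring| rewrite IH; ring]. Qed.

Lemma dX_der e x y : x + y <> 0 ->
  (forall a, is_derive (fun t => val a t y) x (val (sx a) x y)) ->
  is_derive (fun t => ev e t y) x (ev (dX e) x y).
Proof.
  intros Hs Ha. induction e as [|[m a] e IH]; simpl.
  - auto_derive; auto.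
  - rewrite ev_app. simpl. rewrite ev_map.
    eapply is_derive_eq.
    + apply (is_derive_plus (fun t => mval m t y * val a t y)).
      * apply (is_derive_mult (fun t => mval m t y) (fun t => val a t y)).
        apply mono_der; auto. apply Ha. intros; apply Rmult_comm.
      * exact IH.
    + unfold plus, mult; simpl. ring.
Qed.

Lemma dY_der e x y : x + y <> 0 ->
  (forall a, is_derive (fun t => val a x t) y (val (sy a) x y)) ->
  is_derive (fun t => ev e x t) y (ev (dY e) x y).
Proof.
  intros Hs Ha. induction e as [|[m a] e IH]; simpl.
  - auto_derive; auto.
  - rewrite ev_app. simpl. rewrite ev_map.
    eapply is_derive_eq.
    + apply (is_derive_plus (fun t => mval m x t * val a x t)).
      * apply (is_derive_mult (fun t => mval m x t) (fun t => val a x t)).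
        apply mono_dery; auto. apply Ha. intros; apply Rmult_comm.
      * exact IH.
    + unfold plus, mult; simpl. ring.
Qed.

Definition dY0 (e : list (mono*T)) : list (mono*T) :=
  flat_map (fun p => let '(m,a) := p in map (fun m' => (m', a)) (dym m)) e.

Lemma dY_dY0 e x y : (forall a, val (sy a) x y = 0) -> ev (dY e) x y = ev (dY0 e) x y.
Proof.
  intros H. induction e as [|[m a] e IH]; simpl. reflexivity.
  rewrite !ev_app. simpl. rewrite H, IH. ring.
Qed.

Lemma dXdY e x y : (forall a, sx (sy a) = sy (sx a)) ->
  ev (dY (dX e)) x y = ev (dX (dY e)) x y.
Proof.
  intros Hc. induction e as [|[m a] e IH]. reflexivity.
  change (dX ((m,a)::e)) with (((m, sx a) :: map (fun m' => (m', a)) (dxm m)) ++ dX e).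
  change (dY ((m,a)::e)) with (((m, sy a) :: map (fun m' => (m', a)) (dym m)) ++ dY e).
  unfold dY at 1, dX at 2. rewrite !flat_map_app.
  fold (dY (dX e)). fold (dX (dY e)). rewrite !ev_app, IH.
  destruct m as [[[c i] j] d]. rewrite ?Hc.
  destruct i, j, d; cbn -[INR pow Rdiv]; rewrite ?Hc; unfold Rdiv; ring.
Qed.

Variable U : R -> R -> Prop.
Definition Zs (e : list (mono*T)) := forall x y, U x y -> ev e x y = 0.

Hypothesis HU : open2 U.
Hypothesis Hs : forall x y, U x y -> x + y <> 0.

Lemma Zs_dX e : (forall x y, U x y -> forall a, is_derive (fun t => val a t y) x (val (sx a) x y)) ->
  Zs e -> Zs (dX e).
Proof.
  intros Ha Hz x y Hxy. destruct (HU x y Hxy) as [r [Hr Hr']].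
  apply (der_zero_loc (fun t => ev e t y) x _ r Hr).
  - intros t Ht. apply Hz. apply Hr'; auto. rewrite Rminus_eq_0, Rabs_R0; auto.
  - apply dX_der; auto.
Qed.

Lemma Zs_dY e : (forall x y, U x y -> forall a, is_derive (fun t => val a x t) y (val (sy a) x y)) ->
  Zs e -> Zs (dY e).
Proof.
  intros Ha Hz x y Hxy. destruct (HU x y Hxy) as [r [Hr Hr']].
  apply (der_zero_loc (fun t => ev e x t) y _ r Hr).
  - intros t Ht. apply Hz. apply Hr'; auto. rewrite Rminus_eq_0, Rabs_R0; auto.
  - apply dY_der; auto.
Qed.

Lemma Zs_dY0 e : (forall x y, U x y -> forall a, is_derive (fun t => val a x t) y (val (sy a) x y)) ->
  (forall x y, U x y -> forall a, val (sy a) x y = 0) ->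
  Zs e -> Zs (dY0 e).
Proof.
  intros Ha H0 Hz x y Hxy. rewrite <- dY_dY0 by auto. apply Zs_dY; auto.
Qed.
End Gen.

Definition jet := (bool * nat * nat)%type.
Definition jval (Dxi Deta : nat -> nat -> R -> R -> R) (j : jet) (x y : R) : R :=
  let '(f,i,k) := j in if f then Dxi i k x y else Deta i k x y.
Definition jsx (j : jet) : jet := let '(f,i,k) := j in (f, S i, k).
Definition jsy (j : jet) : jet := let '(f,i,k) := j in (f, i, S k).
Definition E0e : list (mono*jet) :=
  [(((6),1%nat,0%nat,0%nat),(false,0%nat,0%nat));
  (((2),1%nat,1%nat,0%nat),(false,0%nat,0%nat));
  (((4),2%nat,0%nat,0%nat),(false,0%nat,0%nat));
  (((-6),0%nat,1%nat,0%nat),(false,0%nat,0%nat));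
  (((-6),1%nat,1%nat,0%nat),(false,0%nat,1%nat));
  (((-7),1%nat,2%nat,0%nat),(false,0%nat,1%nat));
  (((-4),2%nat,1%nat,0%nat),(false,0%nat,1%nat));
  (((-6),0%nat,2%nat,0%nat),(false,0%nat,1%nat));
  (((-3),0%nat,3%nat,0%nat),(false,0%nat,1%nat));
  (((-8),1%nat,1%nat,0%nat),(false,1%nat,0%nat));
  (((-2),1%nat,2%nat,0%nat),(false,1%nat,0%nat));
  (((-4),2%nat,0%nat,0%nat),(false,1%nat,0%nat));
  (((-4),2%nat,1%nat,0%nat),(false,1%nat,0%nat));
  (((-2),3%nat,0%nat,0%nat),(false,1%nat,0%nat));
  (((-4),0%nat,2%nat,0%nat),(false,1%nat,0%nat));
  (((3),1%nat,2%nat,0%nat),(false,2%nat,0%nat));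
  (((3),2%nat,1%nat,0%nat),(false,2%nat,0%nat));
  (((1),3%nat,0%nat,0%nat),(false,2%nat,0%nat));
  (((1),0%nat,3%nat,0%nat),(false,2%nat,0%nat));
  (((-4),1%nat,1%nat,0%nat),(true,0%nat,0%nat));
  (((-12),0%nat,1%nat,0%nat),(true,0%nat,0%nat));
  (((-2),0%nat,2%nat,0%nat),(true,0%nat,0%nat));
  (((12),1%nat,1%nat,0%nat),(true,1%nat,0%nat));
  (((14),1%nat,2%nat,0%nat),(true,1%nat,0%nat));
  (((8),2%nat,1%nat,0%nat),(true,1%nat,0%nat));
  (((12),0%nat,2%nat,0%nat),(true,1%nat,0%nat));
  (((6),0%nat,3%nat,0%nat),(true,1%nat,0%nat))].

Definition E1e : list (mono*jet) :=
  [(((4),0%nat,0%nat,0%nat),(false,0%nat,0%nat));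
  (((2),1%nat,0%nat,0%nat),(false,0%nat,0%nat));
  (((2),1%nat,0%nat,0%nat),(false,1%nat,0%nat));
  (((2),0%nat,1%nat,0%nat),(false,1%nat,0%nat));
  (((4),1%nat,1%nat,0%nat),(false,1%nat,1%nat));
  (((2),2%nat,0%nat,0%nat),(false,1%nat,1%nat));
  (((2),0%nat,2%nat,0%nat),(false,1%nat,1%nat));
  (((4),0%nat,0%nat,0%nat),(true,0%nat,0%nat));
  (((-2),0%nat,1%nat,0%nat),(true,0%nat,0%nat));
  (((12),1%nat,1%nat,0%nat),(true,0%nat,1%nat));
  (((18),0%nat,1%nat,0%nat),(true,0%nat,1%nat));
  (((9),0%nat,2%nat,0%nat),(true,0%nat,1%nat));
  (((-4),1%nat,0%nat,0%nat),(true,1%nat,0%nat));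
  (((-2),1%nat,1%nat,0%nat),(true,1%nat,0%nat));
  (((-2),2%nat,0%nat,0%nat),(true,1%nat,0%nat));
  (((-4),0%nat,1%nat,0%nat),(true,1%nat,0%nat));
  (((-2),1%nat,1%nat,0%nat),(true,2%nat,0%nat));
  (((-1),2%nat,0%nat,0%nat),(true,2%nat,0%nat));
  (((-1),0%nat,2%nat,0%nat),(true,2%nat,0%nat))].

Definition E2e : list (mono*jet) :=
  [(((-1),0%nat,0%nat,0%nat),(false,0%nat,0%nat));
  (((1),1%nat,0%nat,0%nat),(false,0%nat,1%nat));
  (((1),0%nat,1%nat,0%nat),(false,0%nat,1%nat));
  (((2),1%nat,1%nat,0%nat),(false,0%nat,2%nat));
  (((1),2%nat,0%nat,0%nat),(false,0%nat,2%nat));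
  (((1),0%nat,2%nat,0%nat),(false,0%nat,2%nat));
  (((-1),0%nat,0%nat,0%nat),(true,0%nat,0%nat));
  (((-8),1%nat,0%nat,0%nat),(true,0%nat,1%nat));
  (((-4),1%nat,1%nat,0%nat),(true,0%nat,1%nat));
  (((-4),2%nat,0%nat,0%nat),(true,0%nat,1%nat));
  (((-8),0%nat,1%nat,0%nat),(true,0%nat,1%nat));
  (((-4),1%nat,1%nat,0%nat),(true,1%nat,1%nat));
  (((-2),2%nat,0%nat,0%nat),(true,1%nat,1%nat));
  (((-2),0%nat,2%nat,0%nat),(true,1%nat,1%nat))].

Definition E3e : list (mono*jet) :=
  [(((1),0%nat,0%nat,0%nat),(true,0%nat,1%nat));
  (((-1),1%nat,0%nat,0%nat),(true,0%nat,2%nat));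
  (((-1),0%nat,1%nat,0%nat),(true,0%nat,2%nat))].

Definition Cb : list (mono*jet) :=
  [(((1/2),0%nat,0%nat,0%nat),(true,0%nat,2%nat))].

Definition Ab : list (mono*jet) :=
  [(((1),0%nat,0%nat,0%nat),(true,0%nat,0%nat));
  (((-1),1%nat,1%nat,0%nat),(true,0%nat,2%nat));
  (((-1/2),2%nat,0%nat,0%nat),(true,0%nat,2%nat));
  (((-1/2),0%nat,2%nat,0%nat),(true,0%nat,2%nat))].

Definition alb : list (mono*jet) :=
  [(((1/2),0%nat,0%nat,1%nat),(false,0%nat,0%nat));
  (((1/2),0%nat,0%nat,0%nat),(false,0%nat,1%nat));
  (((1/2),0%nat,0%nat,1%nat),(true,0%nat,0%nat));
  (((1/2),0%nat,0%nat,0%nat),(true,0%nat,1%nat));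
  (((-4),1%nat,1%nat,1%nat),(true,0%nat,2%nat));
  (((-2/3),1%nat,2%nat,1%nat),(true,0%nat,2%nat));
  (((-2),2%nat,0%nat,1%nat),(true,0%nat,2%nat));
  (((-4/3),2%nat,1%nat,1%nat),(true,0%nat,2%nat));
  (((-2/3),3%nat,0%nat,1%nat),(true,0%nat,2%nat));
  (((-2),0%nat,2%nat,1%nat),(true,0%nat,2%nat));
  (((-4),1%nat,0%nat,0%nat),(true,0%nat,2%nat));
  (((-4/3),1%nat,1%nat,0%nat),(true,0%nat,2%nat));
  (((-4/3),2%nat,0%nat,0%nat),(true,0%nat,2%nat));
  (((-4),0%nat,1%nat,0%nat),(true,0%nat,2%nat));
  (((-4),1%nat,1%nat,0%nat),(true,0%nat,3%nat));
  (((-2/3),1%nat,2%nat,0%nat),(true,0%nat,3%nat));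
  (((-2),2%nat,0%nat,0%nat),(true,0%nat,3%nat));
  (((-4/3),2%nat,1%nat,0%nat),(true,0%nat,3%nat));
  (((-2/3),3%nat,0%nat,0%nat),(true,0%nat,3%nat));
  (((-2),0%nat,2%nat,0%nat),(true,0%nat,3%nat));
  (((-3/8),1%nat,2%nat,1%nat),(true,1%nat,2%nat));
  (((-3/8),2%nat,1%nat,1%nat),(true,1%nat,2%nat));
  (((-1/8),3%nat,0%nat,1%nat),(true,1%nat,2%nat));
  (((-1/8),0%nat,3%nat,1%nat),(true,1%nat,2%nat));
  (((-3/4),1%nat,1%nat,0%nat),(true,1%nat,2%nat));
  (((-3/8),2%nat,0%nat,0%nat),(true,1%nat,2%nat));
  (((-3/8),0%nat,2%nat,0%nat),(true,1%nat,2%nat));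
  (((-3/8),1%nat,2%nat,0%nat),(true,1%nat,3%nat));
  (((-3/8),2%nat,1%nat,0%nat),(true,1%nat,3%nat));
  (((-1/8),3%nat,0%nat,0%nat),(true,1%nat,3%nat));
  (((-1/8),0%nat,3%nat,0%nat),(true,1%nat,3%nat))].

Definition beb : list (mono*jet) :=
  [(((1/2),1%nat,0%nat,0%nat),(false,0%nat,0%nat));
  (((1/2),0%nat,1%nat,0%nat),(false,0%nat,0%nat));
  (((-1),1%nat,1%nat,0%nat),(false,0%nat,1%nat));
  (((-1/2),2%nat,0%nat,0%nat),(false,0%nat,1%nat));
  (((-1/2),0%nat,2%nat,0%nat),(false,0%nat,1%nat));
  (((1/2),1%nat,0%nat,0%nat),(true,0%nat,0%nat));
  (((1/2),0%nat,1%nat,0%nat),(true,0%nat,0%nat));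
  (((-1),1%nat,1%nat,0%nat),(true,0%nat,1%nat));
  (((-1/2),2%nat,0%nat,0%nat),(true,0%nat,1%nat));
  (((-1/2),0%nat,2%nat,0%nat),(true,0%nat,1%nat));
  (((6),1%nat,2%nat,0%nat),(true,0%nat,2%nat));
  (((2/3),1%nat,3%nat,0%nat),(true,0%nat,2%nat));
  (((6),2%nat,1%nat,0%nat),(true,0%nat,2%nat));
  (((2),2%nat,2%nat,0%nat),(true,0%nat,2%nat));
  (((2),3%nat,0%nat,0%nat),(true,0%nat,2%nat));
  (((2),3%nat,1%nat,0%nat),(true,0%nat,2%nat));
  (((2/3),4%nat,0%nat,0%nat),(true,0%nat,2%nat));
  (((2),0%nat,3%nat,0%nat),(true,0%nat,2%nat));
  (((8),1%nat,3%nat,0%nat),(true,0%nat,3%nat));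
  (((2/3),1%nat,4%nat,0%nat),(true,0%nat,3%nat));
  (((12),2%nat,2%nat,0%nat),(true,0%nat,3%nat));
  (((8/3),2%nat,3%nat,0%nat),(true,0%nat,3%nat));
  (((8),3%nat,1%nat,0%nat),(true,0%nat,3%nat));
  (((4),3%nat,2%nat,0%nat),(true,0%nat,3%nat));
  (((2),4%nat,0%nat,0%nat),(true,0%nat,3%nat));
  (((8/3),4%nat,1%nat,0%nat),(true,0%nat,3%nat));
  (((2/3),5%nat,0%nat,0%nat),(true,0%nat,3%nat));
  (((2),0%nat,4%nat,0%nat),(true,0%nat,3%nat));
  (((1),1%nat,3%nat,0%nat),(true,1%nat,2%nat));
  (((3/2),2%nat,2%nat,0%nat),(true,1%nat,2%nat));
  (((1),3%nat,1%nat,0%nat),(true,1%nat,2%nat));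
  (((1/4),4%nat,0%nat,0%nat),(true,1%nat,2%nat));
  (((1/4),0%nat,4%nat,0%nat),(true,1%nat,2%nat));
  (((5/8),1%nat,4%nat,0%nat),(true,1%nat,3%nat));
  (((5/4),2%nat,3%nat,0%nat),(true,1%nat,3%nat));
  (((5/4),3%nat,2%nat,0%nat),(true,1%nat,3%nat));
  (((5/8),4%nat,1%nat,0%nat),(true,1%nat,3%nat));
  (((1/8),5%nat,0%nat,0%nat),(true,1%nat,3%nat));
  (((1/8),0%nat,5%nat,0%nat),(true,1%nat,3%nat))].

Definition qq (x y p : R) := - ((x + y) * (p - 2 * (2 + x)) * p + (6 + 4 * x + 3 * y) * y) / (x + y) ^ 2.

Lemma F_qq x y p : x + y <> 0 -> F x y p (qq x y p) = 0.
Proof. intros H. unfold F, qq. field. auto. Qed.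

Section Ek.
Variables Dxi Deta : nat -> nat -> R -> R -> R.
Let fp x y p := (x+y)^2 * pr2X_F Dxi Deta x y p (qq x y p).
Lemma E3_val x y : x + y <> 0 ->
  ev _ (jval Dxi Deta) E3e x y = (fp x y 2 + 3 * fp x y 0 - 3 * fp x y 1 - fp x y (-1)) / 6 / (x+y)^3.
Proof. intros H. unfold fp, pr2X_F, eta1, eta2, F_x, F_y, F_p, F_q, qq. simpl. field. auto. Qed.
Lemma E2_val x y : x + y <> 0 ->
  ev _ (jval Dxi Deta) E2e x y = ((fp x y 1 + fp x y (-1)) / 2 - fp x y 0) / (x+y)^2.
Proof. intros H. unfold fp, pr2X_F, eta1, eta2, F_x, F_y, F_p, F_q, qq. simpl. field. auto. Qed.
Lemma E1_val x y : x + y <> 0 ->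
  ev _ (jval Dxi Deta) E1e x y = ((fp x y 1 - fp x y (-1)) / 2 - (fp x y 2 + 3 * fp x y 0 - 3 * fp x y 1 - fp x y (-1)) / 6) / (x+y)^2.
Proof. intros H. unfold fp, pr2X_F, eta1, eta2, F_x, F_y, F_p, F_q, qq. simpl. field. auto. Qed.
Lemma E0_val x y : x + y <> 0 ->
  ev _ (jval Dxi Deta) E0e x y = fp x y 0 / (x+y).
Proof. intros H. unfold fp, pr2X_F, eta1, eta2, F_x, F_y, F_p, F_q, qq. simpl. field. auto. Qed.
End Ek.

Definition DA := option (nat*nat).
Fixpoint dXn (k:nat) (e : list (mono*jet)) : list (mono*jet) :=
  match k with O => e | S k => dX _ jsx (dXn k e) end.
Definition base (K : nat) : list (mono*jet) :=
  match K with O => Cb | 1%nat => Ab | 2%nat => alb | _ => beb end.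
Definition dval (Dxi Deta : nat -> nat -> R -> R -> R) (a : DA) (x y : R) : R :=
  match a with None => 0 | Some (K,k) => ev _ (jval Dxi Deta) (dXn k (base K)) x y end.
Definition dsx (a : DA) : DA := match a with None => None | Some (K,k) => Some (K, S k) end.
Definition dsy (a : DA) : DA := None.

Definition G1d : list (mono*DA) :=
  [(((-6),1%nat,2%nat,0%nat),Some (1%nat,0%nat));
  (((-6),2%nat,1%nat,0%nat),Some (1%nat,0%nat));
  (((-2),3%nat,0%nat,0%nat),Some (1%nat,0%nat));
  (((-2),0%nat,3%nat,0%nat),Some (1%nat,0%nat));
  (((-18),1%nat,2%nat,0%nat),Some (1%nat,1%nat));
  (((-2),1%nat,3%nat,0%nat),Some (1%nat,1%nat));
  (((-18),2%nat,1%nat,0%nat),Some (1%nat,1%nat));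
  (((-6),2%nat,2%nat,0%nat),Some (1%nat,1%nat));
  (((-6),3%nat,0%nat,0%nat),Some (1%nat,1%nat));
  (((-6),3%nat,1%nat,0%nat),Some (1%nat,1%nat));
  (((-2),4%nat,0%nat,0%nat),Some (1%nat,1%nat));
  (((-6),0%nat,3%nat,0%nat),Some (1%nat,1%nat));
  (((-4),1%nat,3%nat,0%nat),Some (1%nat,2%nat));
  (((-6),2%nat,2%nat,0%nat),Some (1%nat,2%nat));
  (((-4),3%nat,1%nat,0%nat),Some (1%nat,2%nat));
  (((-1),4%nat,0%nat,0%nat),Some (1%nat,2%nat));
  (((-1),0%nat,4%nat,0%nat),Some (1%nat,2%nat));
  (((18),1%nat,2%nat,0%nat),Some (2%nat,0%nat));
  (((2),1%nat,3%nat,0%nat),Some (2%nat,0%nat));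
  (((18),2%nat,1%nat,0%nat),Some (2%nat,0%nat));
  (((6),2%nat,2%nat,0%nat),Some (2%nat,0%nat));
  (((6),3%nat,0%nat,0%nat),Some (2%nat,0%nat));
  (((6),3%nat,1%nat,0%nat),Some (2%nat,0%nat));
  (((2),4%nat,0%nat,0%nat),Some (2%nat,0%nat));
  (((6),0%nat,3%nat,0%nat),Some (2%nat,0%nat));
  (((16),1%nat,3%nat,0%nat),Some (2%nat,1%nat));
  (((24),2%nat,2%nat,0%nat),Some (2%nat,1%nat));
  (((16),3%nat,1%nat,0%nat),Some (2%nat,1%nat));
  (((4),4%nat,0%nat,0%nat),Some (2%nat,1%nat));
  (((4),0%nat,4%nat,0%nat),Some (2%nat,1%nat));
  (((6),1%nat,0%nat,0%nat),Some (3%nat,0%nat));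
  (((2),1%nat,1%nat,0%nat),Some (3%nat,0%nat));
  (((2),2%nat,0%nat,0%nat),Some (3%nat,0%nat));
  (((6),0%nat,1%nat,0%nat),Some (3%nat,0%nat));
  (((420),1%nat,3%nat,0%nat),Some (0%nat,0%nat));
  (((192),1%nat,4%nat,0%nat),Some (0%nat,0%nat));
  (((576),2%nat,2%nat,0%nat),Some (0%nat,0%nat));
  (((442),2%nat,3%nat,0%nat),Some (0%nat,0%nat));
  (((16/3),2%nat,4%nat,0%nat),Some (0%nat,0%nat));
  (((348),3%nat,1%nat,0%nat),Some (0%nat,0%nat));
  (((494),3%nat,2%nat,0%nat),Some (0%nat,0%nat));
  (((64/3),3%nat,3%nat,0%nat),Some (0%nat,0%nat));
  (((78),4%nat,0%nat,0%nat),Some (0%nat,0%nat));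
  (((270),4%nat,1%nat,0%nat),Some (0%nat,0%nat));
  (((32),4%nat,2%nat,0%nat),Some (0%nat,0%nat));
  (((58),5%nat,0%nat,0%nat),Some (0%nat,0%nat));
  (((64/3),5%nat,1%nat,0%nat),Some (0%nat,0%nat));
  (((16/3),6%nat,0%nat,0%nat),Some (0%nat,0%nat));
  (((114),0%nat,4%nat,0%nat),Some (0%nat,0%nat));
  (((32),0%nat,5%nat,0%nat),Some (0%nat,0%nat));
  (((225),1%nat,4%nat,0%nat),Some (0%nat,1%nat));
  (((15),1%nat,5%nat,0%nat),Some (0%nat,1%nat));
  (((450),2%nat,3%nat,0%nat),Some (0%nat,1%nat));
  (((75),2%nat,4%nat,0%nat),Some (0%nat,1%nat));
  (((450),3%nat,2%nat,0%nat),Some (0%nat,1%nat));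
  (((150),3%nat,3%nat,0%nat),Some (0%nat,1%nat));
  (((225),4%nat,1%nat,0%nat),Some (0%nat,1%nat));
  (((150),4%nat,2%nat,0%nat),Some (0%nat,1%nat));
  (((45),5%nat,0%nat,0%nat),Some (0%nat,1%nat));
  (((75),5%nat,1%nat,0%nat),Some (0%nat,1%nat));
  (((15),6%nat,0%nat,0%nat),Some (0%nat,1%nat));
  (((45),0%nat,5%nat,0%nat),Some (0%nat,1%nat));
  (((18),1%nat,5%nat,0%nat),Some (0%nat,2%nat));
  (((45),2%nat,4%nat,0%nat),Some (0%nat,2%nat));
  (((60),3%nat,3%nat,0%nat),Some (0%nat,2%nat));
  (((45),4%nat,2%nat,0%nat),Some (0%nat,2%nat));
  (((18),5%nat,1%nat,0%nat),Some (0%nat,2%nat));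
  (((3),6%nat,0%nat,0%nat),Some (0%nat,2%nat));
  (((3),0%nat,6%nat,0%nat),Some (0%nat,2%nat))].

Definition C1_0 : list (mono*DA) :=
  [(((-2),3%nat,0%nat,0%nat),Some (1%nat,0%nat));
  (((-6),3%nat,0%nat,0%nat),Some (1%nat,1%nat));
  (((-2),4%nat,0%nat,0%nat),Some (1%nat,1%nat));
  (((-1),4%nat,0%nat,0%nat),Some (1%nat,2%nat));
  (((6),3%nat,0%nat,0%nat),Some (2%nat,0%nat));
  (((2),4%nat,0%nat,0%nat),Some (2%nat,0%nat));
  (((4),4%nat,0%nat,0%nat),Some (2%nat,1%nat));
  (((6),1%nat,0%nat,0%nat),Some (3%nat,0%nat));
  (((2),2%nat,0%nat,0%nat),Some (3%nat,0%nat));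
  (((78),4%nat,0%nat,0%nat),Some (0%nat,0%nat));
  (((58),5%nat,0%nat,0%nat),Some (0%nat,0%nat));
  (((16/3),6%nat,0%nat,0%nat),Some (0%nat,0%nat));
  (((45),5%nat,0%nat,0%nat),Some (0%nat,1%nat));
  (((15),6%nat,0%nat,0%nat),Some (0%nat,1%nat));
  (((3),6%nat,0%nat,0%nat),Some (0%nat,2%nat))].

Definition C1_1 : list (mono*DA) :=
  [(((-6),2%nat,0%nat,0%nat),Some (1%nat,0%nat));
  (((-18),2%nat,0%nat,0%nat),Some (1%nat,1%nat));
  (((-6),3%nat,0%nat,0%nat),Some (1%nat,1%nat));
  (((-4),3%nat,0%nat,0%nat),Some (1%nat,2%nat));
  (((18),2%nat,0%nat,0%nat),Some (2%nat,0%nat));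
  (((6),3%nat,0%nat,0%nat),Some (2%nat,0%nat));
  (((16),3%nat,0%nat,0%nat),Some (2%nat,1%nat));
  (((6),0%nat,0%nat,0%nat),Some (3%nat,0%nat));
  (((2),1%nat,0%nat,0%nat),Some (3%nat,0%nat));
  (((348),3%nat,0%nat,0%nat),Some (0%nat,0%nat));
  (((270),4%nat,0%nat,0%nat),Some (0%nat,0%nat));
  (((64/3),5%nat,0%nat,0%nat),Some (0%nat,0%nat));
  (((225),4%nat,0%nat,0%nat),Some (0%nat,1%nat));
  (((75),5%nat,0%nat,0%nat),Some (0%nat,1%nat));
  (((18),5%nat,0%nat,0%nat),Some (0%nat,2%nat))].

Definition C1_2 : list (mono*DA) :=
  [(((-6),1%nat,0%nat,0%nat),Some (1%nat,0%nat));
  (((-18),1%nat,0%nat,0%nat),Some (1%nat,1%nat));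
  (((-6),2%nat,0%nat,0%nat),Some (1%nat,1%nat));
  (((-6),2%nat,0%nat,0%nat),Some (1%nat,2%nat));
  (((18),1%nat,0%nat,0%nat),Some (2%nat,0%nat));
  (((6),2%nat,0%nat,0%nat),Some (2%nat,0%nat));
  (((24),2%nat,0%nat,0%nat),Some (2%nat,1%nat));
  (((576),2%nat,0%nat,0%nat),Some (0%nat,0%nat));
  (((494),3%nat,0%nat,0%nat),Some (0%nat,0%nat));
  (((32),4%nat,0%nat,0%nat),Some (0%nat,0%nat));
  (((450),3%nat,0%nat,0%nat),Some (0%nat,1%nat));
  (((150),4%nat,0%nat,0%nat),Some (0%nat,1%nat));
  (((45),4%nat,0%nat,0%nat),Some (0%nat,2%nat))].

Definition C1_3 : list (mono*DA) :=
  [(((-2),0%nat,0%nat,0%nat),Some (1%nat,0%nat));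
  (((-6),0%nat,0%nat,0%nat),Some (1%nat,1%nat));
  (((-2),1%nat,0%nat,0%nat),Some (1%nat,1%nat));
  (((-4),1%nat,0%nat,0%nat),Some (1%nat,2%nat));
  (((6),0%nat,0%nat,0%nat),Some (2%nat,0%nat));
  (((2),1%nat,0%nat,0%nat),Some (2%nat,0%nat));
  (((16),1%nat,0%nat,0%nat),Some (2%nat,1%nat));
  (((420),1%nat,0%nat,0%nat),Some (0%nat,0%nat));
  (((442),2%nat,0%nat,0%nat),Some (0%nat,0%nat));
  (((64/3),3%nat,0%nat,0%nat),Some (0%nat,0%nat));
  (((450),2%nat,0%nat,0%nat),Some (0%nat,1%nat));
  (((150),3%nat,0%nat,0%nat),Some (0%nat,1%nat));
  (((60),3%nat,0%nat,0%nat),Some (0%nat,2%nat))].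

Definition C1_4 : list (mono*DA) :=
  [(((-1),0%nat,0%nat,0%nat),Some (1%nat,2%nat));
  (((4),0%nat,0%nat,0%nat),Some (2%nat,1%nat));
  (((114),0%nat,0%nat,0%nat),Some (0%nat,0%nat));
  (((192),1%nat,0%nat,0%nat),Some (0%nat,0%nat));
  (((16/3),2%nat,0%nat,0%nat),Some (0%nat,0%nat));
  (((225),1%nat,0%nat,0%nat),Some (0%nat,1%nat));
  (((75),2%nat,0%nat,0%nat),Some (0%nat,1%nat));
  (((45),2%nat,0%nat,0%nat),Some (0%nat,2%nat))].

Definition C1_5 : list (mono*DA) :=
  [(((32),0%nat,0%nat,0%nat),Some (0%nat,0%nat));
  (((45),0%nat,0%nat,0%nat),Some (0%nat,1%nat));
  (((15),1%nat,0%nat,0%nat),Some (0%nat,1%nat));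
  (((18),1%nat,0%nat,0%nat),Some (0%nat,2%nat))].

Definition C1_6 : list (mono*DA) :=
  [(((3),0%nat,0%nat,0%nat),Some (0%nat,2%nat))].

Definition G0d : list (mono*DA) :=
  [(((-18),1%nat,2%nat,0%nat),Some (1%nat,0%nat));
  (((-10),1%nat,3%nat,0%nat),Some (1%nat,0%nat));
  (((-18),2%nat,1%nat,0%nat),Some (1%nat,0%nat));
  (((-18),2%nat,2%nat,0%nat),Some (1%nat,0%nat));
  (((-6),3%nat,0%nat,0%nat),Some (1%nat,0%nat));
  (((-14),3%nat,1%nat,0%nat),Some (1%nat,0%nat));
  (((-4),4%nat,0%nat,0%nat),Some (1%nat,0%nat));
  (((-6),0%nat,3%nat,0%nat),Some (1%nat,0%nat));
  (((-2),0%nat,4%nat,0%nat),Some (1%nat,0%nat));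
  (((52),1%nat,3%nat,0%nat),Some (1%nat,1%nat));
  (((28),1%nat,4%nat,0%nat),Some (1%nat,1%nat));
  (((60),2%nat,2%nat,0%nat),Some (1%nat,1%nat));
  (((50),2%nat,3%nat,0%nat),Some (1%nat,1%nat));
  (((28),3%nat,1%nat,0%nat),Some (1%nat,1%nat));
  (((42),3%nat,2%nat,0%nat),Some (1%nat,1%nat));
  (((4),4%nat,0%nat,0%nat),Some (1%nat,1%nat));
  (((16),4%nat,1%nat,0%nat),Some (1%nat,1%nat));
  (((2),5%nat,0%nat,0%nat),Some (1%nat,1%nat));
  (((16),0%nat,4%nat,0%nat),Some (1%nat,1%nat));
  (((6),0%nat,5%nat,0%nat),Some (1%nat,1%nat));
  (((-5),1%nat,4%nat,0%nat),Some (1%nat,2%nat));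
  (((-10),2%nat,3%nat,0%nat),Some (1%nat,2%nat));
  (((-10),3%nat,2%nat,0%nat),Some (1%nat,2%nat));
  (((-5),4%nat,1%nat,0%nat),Some (1%nat,2%nat));
  (((-1),5%nat,0%nat,0%nat),Some (1%nat,2%nat));
  (((-1),0%nat,5%nat,0%nat),Some (1%nat,2%nat));
  (((-46),1%nat,3%nat,0%nat),Some (2%nat,0%nat));
  (((-13),1%nat,4%nat,0%nat),Some (2%nat,0%nat));
  (((-42),2%nat,2%nat,0%nat),Some (2%nat,0%nat));
  (((-19),2%nat,3%nat,0%nat),Some (2%nat,0%nat));
  (((-10),3%nat,1%nat,0%nat),Some (2%nat,0%nat));
  (((-9),3%nat,2%nat,0%nat),Some (2%nat,0%nat));
  (((2),4%nat,0%nat,0%nat),Some (2%nat,0%nat));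
  (((2),4%nat,1%nat,0%nat),Some (2%nat,0%nat));
  (((2),5%nat,0%nat,0%nat),Some (2%nat,0%nat));
  (((-16),0%nat,4%nat,0%nat),Some (2%nat,0%nat));
  (((-3),0%nat,5%nat,0%nat),Some (2%nat,0%nat));
  (((-10),1%nat,4%nat,0%nat),Some (2%nat,1%nat));
  (((-2),1%nat,5%nat,0%nat),Some (2%nat,1%nat));
  (((-20),2%nat,3%nat,0%nat),Some (2%nat,1%nat));
  (((-10),2%nat,4%nat,0%nat),Some (2%nat,1%nat));
  (((-20),3%nat,2%nat,0%nat),Some (2%nat,1%nat));
  (((-20),3%nat,3%nat,0%nat),Some (2%nat,1%nat));
  (((-10),4%nat,1%nat,0%nat),Some (2%nat,1%nat));
  (((-20),4%nat,2%nat,0%nat),Some (2%nat,1%nat));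
  (((-2),5%nat,0%nat,0%nat),Some (2%nat,1%nat));
  (((-10),5%nat,1%nat,0%nat),Some (2%nat,1%nat));
  (((-2),6%nat,0%nat,0%nat),Some (2%nat,1%nat));
  (((-2),0%nat,5%nat,0%nat),Some (2%nat,1%nat));
  (((6),1%nat,5%nat,0%nat),Some (2%nat,2%nat));
  (((15),2%nat,4%nat,0%nat),Some (2%nat,2%nat));
  (((20),3%nat,3%nat,0%nat),Some (2%nat,2%nat));
  (((15),4%nat,2%nat,0%nat),Some (2%nat,2%nat));
  (((6),5%nat,1%nat,0%nat),Some (2%nat,2%nat));
  (((1),6%nat,0%nat,0%nat),Some (2%nat,2%nat));
  (((1),0%nat,6%nat,0%nat),Some (2%nat,2%nat));
  (((18),1%nat,1%nat,0%nat),Some (3%nat,0%nat));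
  (((11),1%nat,2%nat,0%nat),Some (3%nat,0%nat));
  (((12),2%nat,0%nat,0%nat),Some (3%nat,0%nat));
  (((14),2%nat,1%nat,0%nat),Some (3%nat,0%nat));
  (((6),3%nat,0%nat,0%nat),Some (3%nat,0%nat));
  (((6),0%nat,2%nat,0%nat),Some (3%nat,0%nat));
  (((3),0%nat,3%nat,0%nat),Some (3%nat,0%nat));
  (((-18),1%nat,2%nat,0%nat),Some (3%nat,1%nat));
  (((-2),1%nat,3%nat,0%nat),Some (3%nat,1%nat));
  (((-18),2%nat,1%nat,0%nat),Some (3%nat,1%nat));
  (((-6),2%nat,2%nat,0%nat),Some (3%nat,1%nat));
  (((-6),3%nat,0%nat,0%nat),Some (3%nat,1%nat));
  (((-6),3%nat,1%nat,0%nat),Some (3%nat,1%nat));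
  (((-2),4%nat,0%nat,0%nat),Some (3%nat,1%nat));
  (((-6),0%nat,3%nat,0%nat),Some (3%nat,1%nat));
  (((4),1%nat,3%nat,0%nat),Some (3%nat,2%nat));
  (((6),2%nat,2%nat,0%nat),Some (3%nat,2%nat));
  (((4),3%nat,1%nat,0%nat),Some (3%nat,2%nat));
  (((1),4%nat,0%nat,0%nat),Some (3%nat,2%nat));
  (((1),0%nat,4%nat,0%nat),Some (3%nat,2%nat));
  (((-624),1%nat,4%nat,0%nat),Some (0%nat,0%nat));
  (((-250),1%nat,5%nat,0%nat),Some (0%nat,0%nat));
  (((-64/3),1%nat,6%nat,0%nat),Some (0%nat,0%nat));
  (((-936),2%nat,3%nat,0%nat),Some (0%nat,0%nat));
  (((-680),2%nat,4%nat,0%nat),Some (0%nat,0%nat));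
  (((-368/3),2%nat,5%nat,0%nat),Some (0%nat,0%nat));
  (((-624),3%nat,2%nat,0%nat),Some (0%nat,0%nat));
  (((-860),3%nat,3%nat,0%nat),Some (0%nat,0%nat));
  (((-848/3),3%nat,4%nat,0%nat),Some (0%nat,0%nat));
  (((-156),4%nat,1%nat,0%nat),Some (0%nat,0%nat));
  (((-520),4%nat,2%nat,0%nat),Some (0%nat,0%nat));
  (((-992/3),4%nat,3%nat,0%nat),Some (0%nat,0%nat));
  (((-122),5%nat,1%nat,0%nat),Some (0%nat,0%nat));
  (((-608/3),5%nat,2%nat,0%nat),Some (0%nat,0%nat));
  (((-176/3),6%nat,1%nat,0%nat),Some (0%nat,0%nat));
  (((-16/3),7%nat,0%nat,0%nat),Some (0%nat,0%nat));
  (((-156),0%nat,5%nat,0%nat),Some (0%nat,0%nat));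
  (((-32),0%nat,6%nat,0%nat),Some (0%nat,0%nat));
  (((-15),1%nat,5%nat,0%nat),Some (0%nat,1%nat));
  (((185/6),1%nat,6%nat,0%nat),Some (0%nat,1%nat));
  (((-30),2%nat,4%nat,0%nat),Some (0%nat,1%nat));
  (((42),2%nat,5%nat,0%nat),Some (0%nat,1%nat));
  (((-16/3),2%nat,6%nat,0%nat),Some (0%nat,1%nat));
  (((-30),3%nat,3%nat,0%nat),Some (0%nat,1%nat));
  (((-40/3),3%nat,4%nat,0%nat),Some (0%nat,1%nat));
  (((-32),3%nat,5%nat,0%nat),Some (0%nat,1%nat));
  (((-15),4%nat,2%nat,0%nat),Some (0%nat,1%nat));
  (((-575/6),4%nat,3%nat,0%nat),Some (0%nat,1%nat));
  (((-80),4%nat,4%nat,0%nat),Some (0%nat,1%nat));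
  (((-3),5%nat,1%nat,0%nat),Some (0%nat,1%nat));
  (((-213/2),5%nat,2%nat,0%nat),Some (0%nat,1%nat));
  (((-320/3),5%nat,3%nat,0%nat),Some (0%nat,1%nat));
  (((-155/3),6%nat,1%nat,0%nat),Some (0%nat,1%nat));
  (((-80),6%nat,2%nat,0%nat),Some (0%nat,1%nat));
  (((-29/3),7%nat,0%nat,0%nat),Some (0%nat,1%nat));
  (((-32),7%nat,1%nat,0%nat),Some (0%nat,1%nat));
  (((-16/3),8%nat,0%nat,0%nat),Some (0%nat,1%nat));
  (((-3),0%nat,6%nat,0%nat),Some (0%nat,1%nat));
  (((41/6),0%nat,7%nat,0%nat),Some (0%nat,1%nat));
  (((56),1%nat,6%nat,0%nat),Some (0%nat,2%nat));
  (((5/3),1%nat,7%nat,0%nat),Some (0%nat,2%nat));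
  (((168),2%nat,5%nat,0%nat),Some (0%nat,2%nat));
  (((35/3),2%nat,6%nat,0%nat),Some (0%nat,2%nat));
  (((280),3%nat,4%nat,0%nat),Some (0%nat,2%nat));
  (((35),3%nat,5%nat,0%nat),Some (0%nat,2%nat));
  (((280),4%nat,3%nat,0%nat),Some (0%nat,2%nat));
  (((175/3),4%nat,4%nat,0%nat),Some (0%nat,2%nat));
  (((168),5%nat,2%nat,0%nat),Some (0%nat,2%nat));
  (((175/3),5%nat,3%nat,0%nat),Some (0%nat,2%nat));
  (((56),6%nat,1%nat,0%nat),Some (0%nat,2%nat));
  (((35),6%nat,2%nat,0%nat),Some (0%nat,2%nat));
  (((8),7%nat,0%nat,0%nat),Some (0%nat,2%nat));
  (((35/3),7%nat,1%nat,0%nat),Some (0%nat,2%nat));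
  (((5/3),8%nat,0%nat,0%nat),Some (0%nat,2%nat));
  (((8),0%nat,7%nat,0%nat),Some (0%nat,2%nat));
  (((4),1%nat,7%nat,0%nat),Some (0%nat,3%nat));
  (((14),2%nat,6%nat,0%nat),Some (0%nat,3%nat));
  (((28),3%nat,5%nat,0%nat),Some (0%nat,3%nat));
  (((35),4%nat,4%nat,0%nat),Some (0%nat,3%nat));
  (((28),5%nat,3%nat,0%nat),Some (0%nat,3%nat));
  (((14),6%nat,2%nat,0%nat),Some (0%nat,3%nat));
  (((4),7%nat,1%nat,0%nat),Some (0%nat,3%nat));
  (((1/2),8%nat,0%nat,0%nat),Some (0%nat,3%nat));
  (((1/2),0%nat,8%nat,0%nat),Some (0%nat,3%nat))].

Definition C0_0 : list (mono*DA) :=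
  [(((-6),3%nat,0%nat,0%nat),Some (1%nat,0%nat));
  (((-4),4%nat,0%nat,0%nat),Some (1%nat,0%nat));
  (((4),4%nat,0%nat,0%nat),Some (1%nat,1%nat));
  (((2),5%nat,0%nat,0%nat),Some (1%nat,1%nat));
  (((-1),5%nat,0%nat,0%nat),Some (1%nat,2%nat));
  (((2),4%nat,0%nat,0%nat),Some (2%nat,0%nat));
  (((2),5%nat,0%nat,0%nat),Some (2%nat,0%nat));
  (((-2),5%nat,0%nat,0%nat),Some (2%nat,1%nat));
  (((-2),6%nat,0%nat,0%nat),Some (2%nat,1%nat));
  (((1),6%nat,0%nat,0%nat),Some (2%nat,2%nat));
  (((12),2%nat,0%nat,0%nat),Some (3%nat,0%nat));
  (((6),3%nat,0%nat,0%nat),Some (3%nat,0%nat));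
  (((-6),3%nat,0%nat,0%nat),Some (3%nat,1%nat));
  (((-2),4%nat,0%nat,0%nat),Some (3%nat,1%nat));
  (((1),4%nat,0%nat,0%nat),Some (3%nat,2%nat));
  (((-16/3),7%nat,0%nat,0%nat),Some (0%nat,0%nat));
  (((-29/3),7%nat,0%nat,0%nat),Some (0%nat,1%nat));
  (((-16/3),8%nat,0%nat,0%nat),Some (0%nat,1%nat));
  (((8),7%nat,0%nat,0%nat),Some (0%nat,2%nat));
  (((5/3),8%nat,0%nat,0%nat),Some (0%nat,2%nat));
  (((1/2),8%nat,0%nat,0%nat),Some (0%nat,3%nat))].

Definition C0_1 : list (mono*DA) :=
  [(((-18),2%nat,0%nat,0%nat),Some (1%nat,0%nat));
  (((-14),3%nat,0%nat,0%nat),Some (1%nat,0%nat));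
  (((28),3%nat,0%nat,0%nat),Some (1%nat,1%nat));
  (((16),4%nat,0%nat,0%nat),Some (1%nat,1%nat));
  (((-5),4%nat,0%nat,0%nat),Some (1%nat,2%nat));
  (((-10),3%nat,0%nat,0%nat),Some (2%nat,0%nat));
  (((2),4%nat,0%nat,0%nat),Some (2%nat,0%nat));
  (((-10),4%nat,0%nat,0%nat),Some (2%nat,1%nat));
  (((-10),5%nat,0%nat,0%nat),Some (2%nat,1%nat));
  (((6),5%nat,0%nat,0%nat),Some (2%nat,2%nat));
  (((18),1%nat,0%nat,0%nat),Some (3%nat,0%nat));
  (((14),2%nat,0%nat,0%nat),Some (3%nat,0%nat));
  (((-18),2%nat,0%nat,0%nat),Some (3%nat,1%nat));
  (((-6),3%nat,0%nat,0%nat),Some (3%nat,1%nat));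
  (((4),3%nat,0%nat,0%nat),Some (3%nat,2%nat));
  (((-156),4%nat,0%nat,0%nat),Some (0%nat,0%nat));
  (((-122),5%nat,0%nat,0%nat),Some (0%nat,0%nat));
  (((-176/3),6%nat,0%nat,0%nat),Some (0%nat,0%nat));
  (((-3),5%nat,0%nat,0%nat),Some (0%nat,1%nat));
  (((-155/3),6%nat,0%nat,0%nat),Some (0%nat,1%nat));
  (((-32),7%nat,0%nat,0%nat),Some (0%nat,1%nat));
  (((56),6%nat,0%nat,0%nat),Some (0%nat,2%nat));
  (((35/3),7%nat,0%nat,0%nat),Some (0%nat,2%nat));
  (((4),7%nat,0%nat,0%nat),Some (0%nat,3%nat))].

Definition C0_2 : list (mono*DA) :=
  [(((-18),1%nat,0%nat,0%nat),Some (1%nat,0%nat));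
  (((-18),2%nat,0%nat,0%nat),Some (1%nat,0%nat));
  (((60),2%nat,0%nat,0%nat),Some (1%nat,1%nat));
  (((42),3%nat,0%nat,0%nat),Some (1%nat,1%nat));
  (((-10),3%nat,0%nat,0%nat),Some (1%nat,2%nat));
  (((-42),2%nat,0%nat,0%nat),Some (2%nat,0%nat));
  (((-9),3%nat,0%nat,0%nat),Some (2%nat,0%nat));
  (((-20),3%nat,0%nat,0%nat),Some (2%nat,1%nat));
  (((-20),4%nat,0%nat,0%nat),Some (2%nat,1%nat));
  (((15),4%nat,0%nat,0%nat),Some (2%nat,2%nat));
  (((6),0%nat,0%nat,0%nat),Some (3%nat,0%nat));
  (((11),1%nat,0%nat,0%nat),Some (3%nat,0%nat));
  (((-18),1%nat,0%nat,0%nat),Some (3%nat,1%nat));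
  (((-6),2%nat,0%nat,0%nat),Some (3%nat,1%nat));
  (((6),2%nat,0%nat,0%nat),Some (3%nat,2%nat));
  (((-624),3%nat,0%nat,0%nat),Some (0%nat,0%nat));
  (((-520),4%nat,0%nat,0%nat),Some (0%nat,0%nat));
  (((-608/3),5%nat,0%nat,0%nat),Some (0%nat,0%nat));
  (((-15),4%nat,0%nat,0%nat),Some (0%nat,1%nat));
  (((-213/2),5%nat,0%nat,0%nat),Some (0%nat,1%nat));
  (((-80),6%nat,0%nat,0%nat),Some (0%nat,1%nat));
  (((168),5%nat,0%nat,0%nat),Some (0%nat,2%nat));
  (((35),6%nat,0%nat,0%nat),Some (0%nat,2%nat));
  (((14),6%nat,0%nat,0%nat),Some (0%nat,3%nat))].

Definition C0_3 : list (mono*DA) :=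
  [(((-6),0%nat,0%nat,0%nat),Some (1%nat,0%nat));
  (((-10),1%nat,0%nat,0%nat),Some (1%nat,0%nat));
  (((52),1%nat,0%nat,0%nat),Some (1%nat,1%nat));
  (((50),2%nat,0%nat,0%nat),Some (1%nat,1%nat));
  (((-10),2%nat,0%nat,0%nat),Some (1%nat,2%nat));
  (((-46),1%nat,0%nat,0%nat),Some (2%nat,0%nat));
  (((-19),2%nat,0%nat,0%nat),Some (2%nat,0%nat));
  (((-20),2%nat,0%nat,0%nat),Some (2%nat,1%nat));
  (((-20),3%nat,0%nat,0%nat),Some (2%nat,1%nat));
  (((20),3%nat,0%nat,0%nat),Some (2%nat,2%nat));
  (((3),0%nat,0%nat,0%nat),Some (3%nat,0%nat));
  (((-6),0%nat,0%nat,0%nat),Some (3%nat,1%nat));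
  (((-2),1%nat,0%nat,0%nat),Some (3%nat,1%nat));
  (((4),1%nat,0%nat,0%nat),Some (3%nat,2%nat));
  (((-936),2%nat,0%nat,0%nat),Some (0%nat,0%nat));
  (((-860),3%nat,0%nat,0%nat),Some (0%nat,0%nat));
  (((-992/3),4%nat,0%nat,0%nat),Some (0%nat,0%nat));
  (((-30),3%nat,0%nat,0%nat),Some (0%nat,1%nat));
  (((-575/6),4%nat,0%nat,0%nat),Some (0%nat,1%nat));
  (((-320/3),5%nat,0%nat,0%nat),Some (0%nat,1%nat));
  (((280),4%nat,0%nat,0%nat),Some (0%nat,2%nat));
  (((175/3),5%nat,0%nat,0%nat),Some (0%nat,2%nat));
  (((28),5%nat,0%nat,0%nat),Some (0%nat,3%nat))].

Definition C0_4 : list (mono*DA) :=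
  [(((-2),0%nat,0%nat,0%nat),Some (1%nat,0%nat));
  (((16),0%nat,0%nat,0%nat),Some (1%nat,1%nat));
  (((28),1%nat,0%nat,0%nat),Some (1%nat,1%nat));
  (((-5),1%nat,0%nat,0%nat),Some (1%nat,2%nat));
  (((-16),0%nat,0%nat,0%nat),Some (2%nat,0%nat));
  (((-13),1%nat,0%nat,0%nat),Some (2%nat,0%nat));
  (((-10),1%nat,0%nat,0%nat),Some (2%nat,1%nat));
  (((-10),2%nat,0%nat,0%nat),Some (2%nat,1%nat));
  (((15),2%nat,0%nat,0%nat),Some (2%nat,2%nat));
  (((1),0%nat,0%nat,0%nat),Some (3%nat,2%nat));
  (((-624),1%nat,0%nat,0%nat),Some (0%nat,0%nat));
  (((-680),2%nat,0%nat,0%nat),Some (0%nat,0%nat));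
  (((-848/3),3%nat,0%nat,0%nat),Some (0%nat,0%nat));
  (((-30),2%nat,0%nat,0%nat),Some (0%nat,1%nat));
  (((-40/3),3%nat,0%nat,0%nat),Some (0%nat,1%nat));
  (((-80),4%nat,0%nat,0%nat),Some (0%nat,1%nat));
  (((280),3%nat,0%nat,0%nat),Some (0%nat,2%nat));
  (((175/3),4%nat,0%nat,0%nat),Some (0%nat,2%nat));
  (((35),4%nat,0%nat,0%nat),Some (0%nat,3%nat))].

Definition C0_5 : list (mono*DA) :=
  [(((6),0%nat,0%nat,0%nat),Some (1%nat,1%nat));
  (((-1),0%nat,0%nat,0%nat),Some (1%nat,2%nat));
  (((-3),0%nat,0%nat,0%nat),Some (2%nat,0%nat));
  (((-2),0%nat,0%nat,0%nat),Some (2%nat,1%nat));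
  (((-2),1%nat,0%nat,0%nat),Some (2%nat,1%nat));
  (((6),1%nat,0%nat,0%nat),Some (2%nat,2%nat));
  (((-156),0%nat,0%nat,0%nat),Some (0%nat,0%nat));
  (((-250),1%nat,0%nat,0%nat),Some (0%nat,0%nat));
  (((-368/3),2%nat,0%nat,0%nat),Some (0%nat,0%nat));
  (((-15),1%nat,0%nat,0%nat),Some (0%nat,1%nat));
  (((42),2%nat,0%nat,0%nat),Some (0%nat,1%nat));
  (((-32),3%nat,0%nat,0%nat),Some (0%nat,1%nat));
  (((168),2%nat,0%nat,0%nat),Some (0%nat,2%nat));
  (((35),3%nat,0%nat,0%nat),Some (0%nat,2%nat));
  (((28),3%nat,0%nat,0%nat),Some (0%nat,3%nat))].

Definition C0_6 : list (mono*DA) :=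
  [(((1),0%nat,0%nat,0%nat),Some (2%nat,2%nat));
  (((-32),0%nat,0%nat,0%nat),Some (0%nat,0%nat));
  (((-64/3),1%nat,0%nat,0%nat),Some (0%nat,0%nat));
  (((-3),0%nat,0%nat,0%nat),Some (0%nat,1%nat));
  (((185/6),1%nat,0%nat,0%nat),Some (0%nat,1%nat));
  (((-16/3),2%nat,0%nat,0%nat),Some (0%nat,1%nat));
  (((56),1%nat,0%nat,0%nat),Some (0%nat,2%nat));
  (((35/3),2%nat,0%nat,0%nat),Some (0%nat,2%nat));
  (((14),2%nat,0%nat,0%nat),Some (0%nat,3%nat))].

Definition C0_7 : list (mono*DA) :=
  [(((41/6),0%nat,0%nat,0%nat),Some (0%nat,1%nat));
  (((8),0%nat,0%nat,0%nat),Some (0%nat,2%nat));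
  (((5/3),1%nat,0%nat,0%nat),Some (0%nat,2%nat));
  (((4),1%nat,0%nat,0%nat),Some (0%nat,3%nat))].

Definition C0_8 : list (mono*DA) :=
  [(((1/2),0%nat,0%nat,0%nat),Some (0%nat,3%nat))].

Fixpoint dYn0 (k : nat) (e : list (mono*DA)) : list (mono*DA) :=
  match k with O => e | S k => dY0 _ (dYn0 k e) end.

Lemma coef1_0 (v : DA -> R -> R -> R) x y :
  (forall k, (k <= 6)%nat -> ev _ v (dYn0 k G1d) x y = 0) -> ev _ v C1_0 x y = 0.
Proof.
  intros Hk. transitivity (((-y)^0 / (1)) * ev _ v (dYn0 0 G1d) x y + ((-y)^1 / (1)) * ev _ v (dYn0 1 G1d) x y + ((-y)^2 / (2)) * ev _ v (dYn0 2 G1d) x y + ((-y)^3 / (6)) * ev _ v (dYn0 3 G1d) x y + ((-y)^4 / (24)) * ev _ v (dYn0 4 G1d) x y + ((-y)^5 / (120)) * ev _ v (dYn0 5 G1d) x y + ((-y)^6 / (720)) * ev _ v (dYn0 6 G1d) x y).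
  - simpl. field.
  - rewrite !Hk by lia. ring.
Qed.

Lemma coef1_1 (v : DA -> R -> R -> R) x y :
  (forall k, (k <= 6)%nat -> ev _ v (dYn0 k G1d) x y = 0) -> ev _ v C1_1 x y = 0.
Proof.
  intros Hk. transitivity (((-y)^0 / (1)) * ev _ v (dYn0 1 G1d) x y + ((-y)^1 / (1)) * ev _ v (dYn0 2 G1d) x y + ((-y)^2 / (2)) * ev _ v (dYn0 3 G1d) x y + ((-y)^3 / (6)) * ev _ v (dYn0 4 G1d) x y + ((-y)^4 / (24)) * ev _ v (dYn0 5 G1d) x y + ((-y)^5 / (120)) * ev _ v (dYn0 6 G1d) x y).
  - simpl. field.
  - rewrite !Hk by lia. ring.
Qed.

Lemma coef1_2 (v : DA -> R -> R -> R) x y :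
  (forall k, (k <= 6)%nat -> ev _ v (dYn0 k G1d) x y = 0) -> ev _ v C1_2 x y = 0.
Proof.
  intros Hk. transitivity (((-y)^0 / (2)) * ev _ v (dYn0 2 G1d) x y + ((-y)^1 / (2)) * ev _ v (dYn0 3 G1d) x y + ((-y)^2 / (4)) * ev _ v (dYn0 4 G1d) x y + ((-y)^3 / (12)) * ev _ v (dYn0 5 G1d) x y + ((-y)^4 / (48)) * ev _ v (dYn0 6 G1d) x y).
  - simpl. field.
  - rewrite !Hk by lia. ring.
Qed.

Lemma coef1_3 (v : DA -> R -> R -> R) x y :
  (forall k, (k <= 6)%nat -> ev _ v (dYn0 k G1d) x y = 0) -> ev _ v C1_3 x y = 0.
Proof.
  intros Hk. transitivity (((-y)^0 / (6)) * ev _ v (dYn0 3 G1d) x y + ((-y)^1 / (6)) * ev _ v (dYn0 4 G1d) x y + ((-y)^2 / (12)) * ev _ v (dYn0 5 G1d) x y + ((-y)^3 / (36)) * ev _ v (dYn0 6 G1d) x y).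
  - simpl. field.
  - rewrite !Hk by lia. ring.
Qed.

Lemma coef1_4 (v : DA -> R -> R -> R) x y :
  (forall k, (k <= 6)%nat -> ev _ v (dYn0 k G1d) x y = 0) -> ev _ v C1_4 x y = 0.
Proof.
  intros Hk. transitivity (((-y)^0 / (24)) * ev _ v (dYn0 4 G1d) x y + ((-y)^1 / (24)) * ev _ v (dYn0 5 G1d) x y + ((-y)^2 / (48)) * ev _ v (dYn0 6 G1d) x y).
  - simpl. field.
  - rewrite !Hk by lia. ring.
Qed.

Lemma coef1_5 (v : DA -> R -> R -> R) x y :
  (forall k, (k <= 6)%nat -> ev _ v (dYn0 k G1d) x y = 0) -> ev _ v C1_5 x y = 0.
Proof.
  intros Hk. transitivity (((-y)^0 / (120)) * ev _ v (dYn0 5 G1d) x y + ((-y)^1 / (120)) * ev _ v (dYn0 6 G1d) x y).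
  - simpl. field.
  - rewrite !Hk by lia. ring.
Qed.

Lemma coef1_6 (v : DA -> R -> R -> R) x y :
  (forall k, (k <= 6)%nat -> ev _ v (dYn0 k G1d) x y = 0) -> ev _ v C1_6 x y = 0.
Proof.
  intros Hk. transitivity (((-y)^0 / (720)) * ev _ v (dYn0 6 G1d) x y).
  - simpl. field.
  - rewrite !Hk by lia. ring.
Qed.

Lemma coef0_0 (v : DA -> R -> R -> R) x y :
  (forall k, (k <= 8)%nat -> ev _ v (dYn0 k G0d) x y = 0) -> ev _ v C0_0 x y = 0.
Proof.
  intros Hk. transitivity (((-y)^0 / (1)) * ev _ v (dYn0 0 G0d) x y + ((-y)^1 / (1)) * ev _ v (dYn0 1 G0d) x y + ((-y)^2 / (2)) * ev _ v (dYn0 2 G0d) x y + ((-y)^3 / (6)) * ev _ v (dYn0 3 G0d) x y + ((-y)^4 / (24)) * ev _ v (dYn0 4 G0d) x y + ((-y)^5 / (120)) * ev _ v (dYn0 5 G0d) x y + ((-y)^6 / (720)) * ev _ v (dYn0 6 G0d) x y + ((-y)^7 / (5040)) * ev _ v (dYn0 7 G0d) x y + ((-y)^8 / (40320)) * ev _ v (dYn0 8 G0d) x y).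
  - simpl. field.
  - rewrite !Hk by lia. ring.
Qed.

Lemma coef0_1 (v : DA -> R -> R -> R) x y :
  (forall k, (k <= 8)%nat -> ev _ v (dYn0 k G0d) x y = 0) -> ev _ v C0_1 x y = 0.
Proof.
  intros Hk. transitivity (((-y)^0 / (1)) * ev _ v (dYn0 1 G0d) x y + ((-y)^1 / (1)) * ev _ v (dYn0 2 G0d) x y + ((-y)^2 / (2)) * ev _ v (dYn0 3 G0d) x y + ((-y)^3 / (6)) * ev _ v (dYn0 4 G0d) x y + ((-y)^4 / (24)) * ev _ v (dYn0 5 G0d) x y + ((-y)^5 / (120)) * ev _ v (dYn0 6 G0d) x y + ((-y)^6 / (720)) * ev _ v (dYn0 7 G0d) x y + ((-y)^7 / (5040)) * ev _ v (dYn0 8 G0d) x y).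
  - simpl. field.
  - rewrite !Hk by lia. ring.
Qed.

Lemma coef0_2 (v : DA -> R -> R -> R) x y :
  (forall k, (k <= 8)%nat -> ev _ v (dYn0 k G0d) x y = 0) -> ev _ v C0_2 x y = 0.
Proof.
  intros Hk. transitivity (((-y)^0 / (2)) * ev _ v (dYn0 2 G0d) x y + ((-y)^1 / (2)) * ev _ v (dYn0 3 G0d) x y + ((-y)^2 / (4)) * ev _ v (dYn0 4 G0d) x y + ((-y)^3 / (12)) * ev _ v (dYn0 5 G0d) x y + ((-y)^4 / (48)) * ev _ v (dYn0 6 G0d) x y + ((-y)^5 / (240)) * ev _ v (dYn0 7 G0d) x y + ((-y)^6 / (1440)) * ev _ v (dYn0 8 G0d) x y).
  - simpl. field.
  - rewrite !Hk by lia. ring.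
Qed.

Lemma coef0_3 (v : DA -> R -> R -> R) x y :
  (forall k, (k <= 8)%nat -> ev _ v (dYn0 k G0d) x y = 0) -> ev _ v C0_3 x y = 0.
Proof.
  intros Hk. transitivity (((-y)^0 / (6)) * ev _ v (dYn0 3 G0d) x y + ((-y)^1 / (6)) * ev _ v (dYn0 4 G0d) x y + ((-y)^2 / (12)) * ev _ v (dYn0 5 G0d) x y + ((-y)^3 / (36)) * ev _ v (dYn0 6 G0d) x y + ((-y)^4 / (144)) * ev _ v (dYn0 7 G0d) x y + ((-y)^5 / (720)) * ev _ v (dYn0 8 G0d) x y).
  - simpl. field.
  - rewrite !Hk by lia. ring.
Qed.

Lemma coef0_4 (v : DA -> R -> R -> R) x y :
  (forall k, (k <= 8)%nat -> ev _ v (dYn0 k G0d) x y = 0) -> ev _ v C0_4 x y = 0.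
Proof.
  intros Hk. transitivity (((-y)^0 / (24)) * ev _ v (dYn0 4 G0d) x y + ((-y)^1 / (24)) * ev _ v (dYn0 5 G0d) x y + ((-y)^2 / (48)) * ev _ v (dYn0 6 G0d) x y + ((-y)^3 / (144)) * ev _ v (dYn0 7 G0d) x y + ((-y)^4 / (576)) * ev _ v (dYn0 8 G0d) x y).
  - simpl. field.
  - rewrite !Hk by lia. ring.
Qed.

Lemma coef0_5 (v : DA -> R -> R -> R) x y :
  (forall k, (k <= 8)%nat -> ev _ v (dYn0 k G0d) x y = 0) -> ev _ v C0_5 x y = 0.
Proof.
  intros Hk. transitivity (((-y)^0 / (120)) * ev _ v (dYn0 5 G0d) x y + ((-y)^1 / (120)) * ev _ v (dYn0 6 G0d) x y + ((-y)^2 / (240)) * ev _ v (dYn0 7 G0d) x y + ((-y)^3 / (720)) * ev _ v (dYn0 8 G0d) x y).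
  - simpl. field.
  - rewrite !Hk by lia. ring.
Qed.

Lemma coef0_6 (v : DA -> R -> R -> R) x y :
  (forall k, (k <= 8)%nat -> ev _ v (dYn0 k G0d) x y = 0) -> ev _ v C0_6 x y = 0.
Proof.
  intros Hk. transitivity (((-y)^0 / (720)) * ev _ v (dYn0 6 G0d) x y + ((-y)^1 / (720)) * ev _ v (dYn0 7 G0d) x y + ((-y)^2 / (1440)) * ev _ v (dYn0 8 G0d) x y).
  - simpl. field.
  - rewrite !Hk by lia. ring.
Qed.

Lemma coef0_7 (v : DA -> R -> R -> R) x y :
  (forall k, (k <= 8)%nat -> ev _ v (dYn0 k G0d) x y = 0) -> ev _ v C0_7 x y = 0.
Proof.
  intros Hk. transitivity (((-y)^0 / (5040)) * ev _ v (dYn0 7 G0d) x y + ((-y)^1 / (5040)) * ev _ v (dYn0 8 G0d) x y).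
  - simpl. field.
  - rewrite !Hk by lia. ring.
Qed.

Lemma coef0_8 (v : DA -> R -> R -> R) x y :
  (forall k, (k <= 8)%nat -> ev _ v (dYn0 k G0d) x y = 0) -> ev _ v C0_8 x y = 0.
Proof.
  intros Hk. transitivity (((-y)^0 / (40320)) * ev _ v (dYn0 8 G0d) x y).
  - simpl. field.
  - rewrite !Hk by lia. ring.
Qed.

Ltac nrm h := simpl in h; unfold Rdiv in h; rewrite ?Rinv_1 in h; ring_simplify in h.

Lemma alg_c (v : DA -> R -> R -> R) x y :
  ev _ v C1_6 x y = 0 -> ev _ v C0_8 x y = 0 -> ev _ v C0_7 x y = 0 -> ev _ v C1_5 x y = 0 ->
  v (Some (0,0)%nat) x y = 0.
Proof.
  intros h16 h08 h07 h15. nrm h16. nrm h08. 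
  assert (c2 : v (Some (0,2)%nat) x y = 0) by lra.
  assert (c3 : v (Some (0,3)%nat) x y = 0) by lra.
  nrm h07. rewrite c2, c3 in h07. ring_simplify in h07.
  assert (c1 : v (Some (0,1)%nat) x y = 0) by lra.
  nrm h15. rewrite c1, c2 in h15. ring_simplify in h15. lra.
Qed.

Definition Bexpr : list (mono*DA) := [((6,0%nat,0%nat,0%nat),Some (3,0)%nat); ((2,1%nat,0%nat,0%nat),Some (3,0)%nat)].

Lemma alg_b (v : DA -> R -> R -> R) x y :
  v (Some (0,0)%nat) x y = 0 -> v (Some (0,1)%nat) x y = 0 -> v (Some (0,2)%nat) x y = 0 ->
  ev _ v C1_1 x y = 0 -> ev _ v C1_3 x y = 0 -> ev _ v C1_4 x y = 0 -> ev _ v Bexpr x y = 0.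
Proof.
  intros c0 c1 c2 h1 h3 h4. nrm h1. nrm h3. nrm h4. rewrite c0, c1, c2 in h1, h3, h4.
  ring_simplify in h4. ring_simplify in h3. ring_simplify in h1.
  assert (A2 : v (Some (1,2)%nat) x y = 4 * v (Some (2,1)%nat) x y) by lra.
  rewrite A2 in h3, h1. ring_simplify in h3. ring_simplify in h1.
  assert (A0 : v (Some (1,0)%nat) x y = (-6 * v (Some (1,1)%nat) x y - 2 * x * v (Some (1,1)%nat) x y
     + 6 * v (Some (2,0)%nat) x y + 2 * x * v (Some (2,0)%nat) x y)/2) by lra.
  rewrite A0 in h1. ring_simplify in h1.
  simpl. unfold Rdiv. rewrite ?Rinv_1. ring_simplify. lra.
Qed.

Lemma alg_b0 (v : DA -> R -> R -> R) x y :
  ev _ v Bexpr x y = 0 -> ev _ v (dX _ dsx Bexpr) x y = 0 -> v (Some (3,0)%nat) x y = 0.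
Proof.
  intros h hx. nrm h. nrm hx.
  destruct (Req_dec x (-3)) as [E|E].
  - subst. lra.
  - assert (h' : (6 + 2 * x) * v (Some (3,0)%nat) x y = 0) by lra.
    apply Rmult_integral in h' as [h'|h']; auto. exfalso; apply E; lra.
Qed.

Lemma alg_final (v : DA -> R -> R -> R) x y :
  v (Some (0,0)%nat) x y = 0 -> v (Some (0,1)%nat) x y = 0 -> v (Some (0,2)%nat) x y = 0 ->
  v (Some (0,3)%nat) x y = 0 -> v (Some (0,4)%nat) x y = 0 -> v (Some (3,2)%nat) x y = 0 ->
  ev _ v C1_4 x y = 0 -> ev _ v (dX _ dsx C1_4) x y = 0 ->
  ev _ v C1_3 x y = 0 -> ev _ v (dX _ dsx C1_3) x y = 0 ->
  ev _ v C0_6 x y = 0 -> ev _ v (dX _ dsx C0_6) x y = 0 ->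
  ev _ v C0_5 x y = 0 -> ev _ v (dX _ dsx C0_5) x y = 0 -> ev _ v C0_4 x y = 0 ->
  v (Some (1,0)%nat) x y = 0 /\ v (Some (2,0)%nat) x y = 0.
Proof.
  intros c0 c1 c2 c3 c4 b2 h4 h4x h3 h3x h6 h6x h5 h5x h04.
  nrm h4; nrm h4x; nrm h3; nrm h3x; nrm h6; nrm h6x; nrm h5; nrm h5x; nrm h04.
  rewrite ?c0, ?c1, ?c2, ?c3, ?c4, ?b2 in h4. rewrite ?c0, ?c1, ?c2, ?c3, ?c4, ?b2 in h4x. rewrite ?c0, ?c1, ?c2, ?c3, ?c4, ?b2 in h3. rewrite ?c0, ?c1, ?c2, ?c3, ?c4, ?b2 in h3x. rewrite ?c0, ?c1, ?c2, ?c3, ?c4, ?b2 in h6. rewrite ?c0, ?c1, ?c2, ?c3, ?c4, ?b2 in h6x. rewrite ?c0, ?c1, ?c2, ?c3, ?c4, ?b2 in h5. rewrite ?c0, ?c1, ?c2, ?c3, ?c4, ?b2 in h5x. rewrite ?c0, ?c1, ?c2, ?c3, ?c4, ?b2 in h04.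
  ring_simplify in h4; ring_simplify in h4x; ring_simplify in h3; ring_simplify in h3x;
  ring_simplify in h6; ring_simplify in h6x; ring_simplify in h5; ring_simplify in h5x; ring_simplify in h04.
  assert (a2 : v (Some (2,2)%nat) x y = 0) by lra.
  assert (a3 : v (Some (2,3)%nat) x y = 0) by lra.
  rewrite ?a2, ?a3 in h4. rewrite ?a2, ?a3 in h4x. rewrite ?a2, ?a3 in h3. rewrite ?a2, ?a3 in h3x. rewrite ?a2, ?a3 in h5. rewrite ?a2, ?a3 in h5x. rewrite ?a2, ?a3 in h04.
  ring_simplify in h4; ring_simplify in h4x; ring_simplify in h3; ring_simplify in h3x;
  ring_simplify in h5; ring_simplify in h5x; ring_simplify in h04.
  assert (A3 : v (Some (1,3)%nat) x y = 0) by lra.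
  assert (A2 : v (Some (1,2)%nat) x y = 4 * v (Some (2,1)%nat) x y) by lra.
  rewrite ?A3, ?A2 in h3. rewrite ?A3, ?A2 in h3x. rewrite ?A3, ?A2 in h5. rewrite ?A3, ?A2 in h5x. rewrite ?A3, ?A2 in h04.
  ring_simplify in h3; ring_simplify in h3x; ring_simplify in h5; ring_simplify in h5x; ring_simplify in h04.
  assert (a1 : v (Some (2,1)%nat) x y = 0) by lra.
  rewrite ?a1 in h3. rewrite ?a1 in h3x. rewrite ?a1 in h5. rewrite ?a1 in h04.
  ring_simplify in h3; ring_simplify in h3x; ring_simplify in h5; ring_simplify in h04.
  assert (a0 : v (Some (2,0)%nat) x y = 2 * v (Some (1,1)%nat) x y) by lra.
  rewrite ?a0 in h3. rewrite ?a0 in h04. ring_simplify in h3. ring_simplify in h04.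
  assert (A0 : v (Some (1,0)%nat) x y = (3 + x) * v (Some (1,1)%nat) x y) by lra.
  rewrite A0 in h04. ring_simplify in h04.
  assert (A1 : v (Some (1,1)%nat) x y = 0) by lra.
  rewrite A0, a0, A1. split; ring.
Qed.

Section Main.
Variable U : R -> R -> Prop.
Variables Dxi Deta : nat -> nat -> R -> R -> R.
Hypothesis HU : open2 U.
Hypothesis Hs : forall x y, U x y -> x + y <> 0.
Hypothesis Hxi : forall i j, partial_x_on U (Dxi i j) (Dxi (S i) j) /\ partial_y_on U (Dxi i j) (Dxi i (S j)) /\ cont2_on U (Dxi i j).
Hypothesis Heta : forall i j, partial_x_on U (Deta i j) (Deta (S i) j) /\ partial_y_on U (Deta i j) (Deta i (S j)) /\ cont2_on U (Deta i j).
Hypothesis HF : forall x y p q, U x y -> F x y p q = 0 -> pr2X_F Dxi Deta x y p q = 0.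

Notation jv := (jval Dxi Deta).
Notation jev := (ev _ jv).
Notation jZ := (Zs _ jv U).

Lemma jder_x x y : U x y -> forall a, is_derive (fun t => jv a t y) x (jv (jsx a) x y).
Proof.
  intros H [[f i] k]. apply is_derive_Reals. destruct f; simpl.
  - apply (proj1 (Hxi i k)); auto.
  - apply (proj1 (Heta i k)); auto.
Qed.
Lemma jder_y x y : U x y -> forall a, is_derive (fun t => jv a x t) y (jv (jsy a) x y).
Proof.
  intros H [[f i] k]. apply is_derive_Reals. destruct f; simpl.
  - apply (proj1 (proj2 (Hxi i k))); auto.
  - apply (proj1 (proj2 (Heta i k))); auto.
Qed.

Lemma jZdX e : jZ e -> jZ (dX _ jsx e).
Proof. apply Zs_dX; auto. exact jder_x. Qed.
Lemma jZdY e : jZ e -> jZ (dY _ jsy e).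
Proof. apply Zs_dY; auto. exact jder_y. Qed.

Lemma fp0 x y p : U x y -> (x+y)^2 * pr2X_F Dxi Deta x y p (qq x y p) = 0.
Proof. intros H. rewrite HF; auto. ring. apply F_qq; auto. Qed.

Lemma ZE3 : jZ E3e.
Proof. intros x y H. rewrite E3_val by auto. rewrite !fp0 by auto. field. auto. Qed.
Lemma ZE2 : jZ E2e.
Proof. intros x y H. rewrite E2_val by auto. rewrite !fp0 by auto. field. auto. Qed.
Lemma ZE1 : jZ E1e.
Proof. intros x y H. rewrite E1_val by auto. rewrite !fp0 by auto. field. auto. Qed.
Lemma ZE0 : jZ E0e.
Proof. intros x y H. rewrite E0_val by auto. rewrite !fp0 by auto. field. auto. Qed.

Ltac from_h h k := match type of h with ?L = 0 => transitivity (k * L); [ simpl; field; auto | rewrite h; ring ] end.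

Definition F1e : list (mono*jet) := [((1,0%nat,0%nat,0%nat),(true,0%nat,3%nat))].
Lemma ZF1 : jZ F1e.
Proof. intros x y H. pose proof (jZdY _ ZE3 x y H) as h. from_h h (-/(x+y)). Qed.

Section Pt.
Variables x y : R.
Hypothesis H : U x y.
Let Hs' := Hs x y H.
Lemma R_X01 : Dxi 0 1 x y = (x+y) * Dxi 0 2 x y.
Proof. apply Rminus_diag_uniq. pose proof (ZE3 x y H) as h. from_h h 1. Qed.
Lemma R_X11 : Dxi 1 1 x y = Dxi 0 2 x y + (x+y) * Dxi 1 2 x y.
Proof. apply Rminus_diag_uniq. pose proof (jZdX _ ZE3 x y H) as h. from_h h 1. Qed.
Lemma R_X03 : Dxi 0 3 x y = 0.
Proof. pose proof (ZF1 x y H) as h. from_h h 1. Qed.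
Lemma R_X04 : Dxi 0 4 x y = 0.
Proof. pose proof (jZdY _ ZF1 x y H) as h. from_h h 1. Qed.
Lemma R_X13 : Dxi 1 3 x y = 0.
Proof. pose proof (jZdX _ ZF1 x y H) as h. from_h h 1. Qed.
Lemma R_X14 : Dxi 1 4 x y = 0.
Proof. pose proof (jZdX _ (jZdY _ ZF1) x y H) as h. from_h h 1. Qed.
Lemma R_X23 : Dxi 2 3 x y = 0.
Proof. pose proof (jZdX _ (jZdX _ ZF1) x y H) as h. from_h h 1. Qed.
Lemma R_Y02 : Deta 0 2 x y = (Deta 0 0 x y - (x+y) * Deta 0 1 x y + 8*(x+y)*Dxi 0 1 x y
   - 4*(x+y)*y*Dxi 0 1 x y + 4*(x+y)^2*Dxi 0 1 x y + 2*(x+y)^2*Dxi 1 1 x y + Dxi 0 0 x y)/(x+y)^2.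
Proof. apply Rminus_diag_uniq. pose proof (ZE2 x y H) as h. from_h h (/(x+y)^2). Qed.
End Pt.

Ltac rwrules x y H := rewrite ?(R_Y02 x y H), ?(R_X11 x y H), ?(R_X01 x y H), ?(R_X03 x y H),
  ?(R_X04 x y H), ?(R_X13 x y H), ?(R_X14 x y H), ?(R_X23 x y H).

Lemma ZyC : jZ (dY _ jsy Cb).
Proof. intros x y H. simpl. rwrules x y H. field; auto. Qed.
Lemma ZyA : jZ (dY _ jsy Ab).
Proof. intros x y H. simpl. rwrules x y H. field; auto. Qed.
Lemma Zyal : jZ (dY _ jsy alb).
Proof. intros x y H. simpl. rwrules x y H. field; auto. Qed.
Lemma Zybe : jZ (dY _ jsy beb).
Proof. intros x y H. simpl. rwrules x y H. field; auto. Qed.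

Lemma Zy_base K : jZ (dY _ jsy (base K)).
Proof. destruct K as [|[|[|K]]]; simpl; [exact ZyC|exact ZyA|exact Zyal|exact Zybe]. Qed.
Lemma Zy_dXn K k : jZ (dY _ jsy (dXn k (base K))).
Proof.
  induction k as [|k IH]; simpl. apply Zy_base.
  intros x y H. rewrite dXdY. apply jZdX; auto. intros [[f i] j]; reflexivity.
Qed.

Notation dv := (dval Dxi Deta).
Notation dZ := (Zs _ dv U).

Lemma dder_x x y : U x y -> forall a, is_derive (fun t => dv a t y) x (dv (dsx a) x y).
Proof.
  intros H [[K k]|]; simpl.
  - apply dX_der; auto. apply jder_x; auto.
  - auto_derive; auto.
Qed.
Lemma dder_y x y : U x y -> forall a, is_derive (fun t => dv a x t) y (dv (dsy a) x y).
Proof.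
  intros H [[K k]|]; simpl.
  - eapply is_derive_eq. { apply dY_der; [auto|]. apply jder_y; auto. } apply Zy_dXn; auto.
  - auto_derive; auto.
Qed.
Lemma dZdX e : dZ e -> dZ (dX _ dsx e).
Proof. apply Zs_dX; auto. exact dder_x. Qed.
Lemma dZdY e : dZ e -> dZ (dY0 _ e).
Proof. apply (Zs_dY0 _ _ dsy); auto; try exact dder_y. Qed.

Lemma ZG1 : dZ G1d.
Proof.
  intros x y H. transitivity ((x+y)^2 * jev E1e x y).
  - simpl. rwrules x y H. field; auto.
  - rewrite ZE1; auto. ring.
Qed.

Lemma ZG0 : dZ G0d.
Proof.
  intros x y H. transitivity ((x+y)^2 * jev E0e x y).
  - simpl. rwrules x y H. field; auto.
  - rewrite ZE0; auto. ring.
Qed.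

Lemma ZGn1 k : dZ (dYn0 k G1d).
Proof. induction k; simpl. apply ZG1. apply dZdY; auto. Qed.
Lemma ZGn0 k : dZ (dYn0 k G0d).
Proof. induction k; simpl. apply ZG0. apply dZdY; auto. Qed.

Ltac zc l := intros x y H; apply l; intros k _; apply ZGn1 || apply ZGn0; auto.
Lemma ZC1_6 : dZ C1_6. Proof. zc coef1_6. Qed.
Lemma ZC1_5 : dZ C1_5. Proof. zc coef1_5. Qed.
Lemma ZC1_4 : dZ C1_4. Proof. zc coef1_4. Qed.
Lemma ZC1_3 : dZ C1_3. Proof. zc coef1_3. Qed.
Lemma ZC1_1 : dZ C1_1. Proof. zc coef1_1. Qed.
Lemma ZC0_8 : dZ C0_8. Proof. zc coef0_8. Qed.
Lemma ZC0_7 : dZ C0_7. Proof. zc coef0_7. Qed.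
Lemma ZC0_6 : dZ C0_6. Proof. zc coef0_6. Qed.
Lemma ZC0_5 : dZ C0_5. Proof. zc coef0_5. Qed.
Lemma ZC0_4 : dZ C0_4. Proof. zc coef0_4. Qed.

Definition sgl (K k : nat) : list (mono*DA) := [((1,0%nat,0%nat,0%nat), Some (K,k))].
Lemma ev_sgl (v : DA -> R -> R -> R) K k x y : ev _ v (sgl K k) x y = v (Some (K,k)) x y.
Proof. unfold sgl; simpl. field. Qed.
Lemma dX_sgl K k : dX _ dsx (sgl K k) = sgl K (S k).
Proof. reflexivity. Qed.

Lemma Zc0 : dZ (sgl 0 0).
Proof.
  intros x y H. rewrite ev_sgl. apply alg_c; [apply ZC1_6|apply ZC0_8|apply ZC0_7|apply ZC1_5]; auto.
Qed.
Lemma Zck k : dZ (sgl 0 k).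
Proof. induction k. apply Zc0. rewrite <- dX_sgl. apply dZdX; auto. Qed.
Lemma ck k x y : U x y -> dv (Some (0,k)%nat) x y = 0.
Proof. intros H. rewrite <- ev_sgl. apply Zck; auto. Qed.

Lemma ZB : dZ Bexpr.
Proof.
  intros x y H. apply alg_b; try apply ck; auto; [apply ZC1_1|apply ZC1_3|apply ZC1_4]; auto.
Qed.
Lemma Zb0 : dZ (sgl 3 0).
Proof.
  intros x y H. rewrite ev_sgl. apply alg_b0; [apply ZB|apply dZdX; [apply ZB|]]; auto.
Qed.
Lemma bk k x y : U x y -> dv (Some (3,k)%nat) x y = 0.
Proof.
  intros H. rewrite <- ev_sgl. revert x y H. induction k. apply Zb0. rewrite <- dX_sgl. apply dZdX; auto.
Qed.

Lemma Aa0 x y : U x y -> dv (Some (1,0)%nat) x y = 0 /\ dv (Some (2,0)%nat) x y = 0.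
Proof.
  intros H. apply alg_final; try apply ck; try apply bk; auto.
  - apply ZC1_4; auto.
  - apply dZdX; auto. apply ZC1_4.
  - apply ZC1_3; auto.
  - apply dZdX; auto. apply ZC1_3.
  - apply ZC0_6; auto.
  - apply dZdX; auto. apply ZC0_6.
  - apply ZC0_5; auto.
  - apply dZdX; auto. apply ZC0_5.
  - apply ZC0_4; auto.
Qed.

Lemma xi_rep x y : U x y -> Dxi 0 0 x y = dv (Some (1,0)%nat) x y + (x+y)^2 * dv (Some (0,0)%nat) x y.
Proof. intros H. simpl. field. Qed.
Lemma eta_rep x y : U x y -> Deta 0 0 x y = - dv (Some (1,0)%nat) x y + (x+y) * dv (Some (2,0)%nat) x y
  + dv (Some (3,0)%nat) x y / (x+y) + (21 + 8*x) * (x+y)^2 * dv (Some (0,0)%nat) x y / 3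
  + (x+y)^3 * dv (Some (0,1)%nat) x y / 2.
Proof. intros H. simpl. field. auto. Qed.

Lemma trivial_sym x y : U x y -> Dxi 0 0 x y = 0 /\ Deta 0 0 x y = 0.
Proof.
  intros H. destruct (Aa0 x y H) as [A0 a0].
  rewrite xi_rep, eta_rep, A0, a0, !ck, bk by auto. split; field; auto.
Qed.

End Main.


Theorem mainTheorem5 :
  forall (U : R -> R -> Prop) (xi eta : R -> R -> R),
    open2 U ->
    (forall x y, U x y -> x + y <> 0) ->
    lie_point_symmetry U xi eta ->
    forall x y, U x y -> xi x y = 0 /\ eta x y = 0.
Proof.
  intros U xi eta HU Hs [Dxi [Deta [[Hx0 Hx] [[He0 He] HF]]]] x y H.
  rewrite <- (Hx0 x y H), <- (He0 x y H).
  exact (trivial_sym U Dxi Deta HU Hs Hx He HF x y H).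
Qed.
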